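(* Let $P$ be a poset. (1) $\mathcal{M}(P)$ is a left gcd-monoid if and only if for every $a\in P$ the subset $\{x\in P: x\ge a\}$ is a meet-semilattice (under the induced order). (2) $\mathcal{M}(P)$ is a right gcd-monoid if and only if for every $a\in P$ the subset $\{x\in P:x\le a\}$ is a join-semilattice.
   Context: For a poset $P$, the interval monoid $\mathcal{M}(P)$ is the monoid presented by generators $[x,y]$ for $x\le y$ in $P$ and relations $[x,x]=1$ ($x\in P$) and $[x,z]=[x,y][y,z]$ whenever $x\le y\le z$. In a monoid $M$, $a\leqslant b$ iff $b=ax$ for some $x$, and $a\mathbin{\widetilde\leqslant}b$ iff $b=xa$ for some $x$. $M$ is a left gcd-monoid if it is conical ($xy=1\Rightarrow x=1$), left cancellative, and any two elements have a greatest lower bound w.r.t. $\leqslant$; a right gcd-monoid if it is conical, right cancellative, and any two elements have a greatest lower bound w.r.t. $\mathbin{\widetilde\leqslant}$. *)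

(* Defs.v *)
From HB Require Import structures.
From mathcomp Require Import all_boot all_order.
Set Implicit Arguments. Unset Strict Implicit. Unset Printing Implicit Defensive.
Import Order.TTheory.
Local Open Scope order_scope.

(* Generators [x,y] of the interval monoid, for x <= y in P
   (boolean order, so the proof component is irrelevant). *)
Definition ivgen d (P : porderType d) := {p : P * P | p.1 <= p.2}.

Definition ivg d (P : porderType d) (x y : P) (h : x <= y) : ivgen P :=
  exist (fun p : P * P => p.1 <= p.2) (x, y) h.

(* Words over the generators; M(P) is the quotient of the free monoid
   (seq (ivgen P), concatenation, [::]) by the congruence [mcong]
   generated by the defining relations. *)
Inductive mcong d (P : porderType d) : seq (ivgen P) -> seq (ivgen P) -> Prop :=
| mcong_refl w : mcong w w
| mcong_sym u v : mcong u v -> mcong v u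
| mcong_trans u v w : mcong u v -> mcong v w -> mcong u w
| mcong_unit (u v : seq (ivgen P)) (x : P) :
    mcong (u ++ [:: ivg (lexx x)] ++ v) (u ++ v)
| mcong_split (u v : seq (ivgen P)) (x y z : P) (hxy : x <= y) (hyz : y <= z) :
    mcong (u ++ [:: ivg (le_trans hxy hyz)] ++ v)
          (u ++ [:: ivg hxy; ivg hyz] ++ v).

Definition mleft d (P : porderType d) (a b : seq (ivgen P)) : Prop :=
  exists c, mcong b (a ++ c).
Definition mright d (P : porderType d) (a b : seq (ivgen P)) : Prop :=
  exists c, mcong b (c ++ a).

Definition conical d (P : porderType d) : Prop :=
  forall a b : seq (ivgen P), mcong (a ++ b) [::] -> mcong a [::].

Definition left_cancellative d (P : porderType d) : Prop :=
  forall a b c : seq (ivgen P), mcong (a ++ b) (a ++ c) -> mcong b c.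

Definition right_cancellative d (P : porderType d) : Prop :=
  forall a b c : seq (ivgen P), mcong (b ++ a) (c ++ a) -> mcong b c.

Definition left_gcd_monoid d (P : porderType d) : Prop :=
  [/\ conical P, left_cancellative P &
      forall a b : seq (ivgen P), exists g,
        [/\ mleft g a, mleft g b &
            forall h, mleft h a -> mleft h b -> mleft h g]].

Definition right_gcd_monoid d (P : porderType d) : Prop :=
  [/\ conical P, right_cancellative P &
      forall a b : seq (ivgen P), exists g,
        [/\ mright g a, mright g b &
            forall h, mright h a -> mright h b -> mright h g]].

Definition upset_meet_semilattice d (P : porderType d) (a : P) : Prop :=
  forall x y : P, a <= x -> a <= y ->
    exists m : P, [/\ a <= m, m <= x, m <= y &
      forall z : P, a <= z -> z <= x -> z <= y -> z <= m].

Definition downset_join_semilattice d (P : porderType d) (a : P) : Prop :=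
  forall x y : P, x <= a -> y <= a ->
    exists m : P, [/\ m <= a, x <= m, y <= m &
      forall z : P, z <= a -> x <= z -> y <= z -> m <= z].

(* Main.v *)
Require Import Defs.
From mathcomp Require Import all_boot all_order.
Set Implicit Arguments. Unset Strict Implicit. Unset Printing Implicit Defensive.
Import Order.TTheory.
Local Open Scope order_scope.

Definition cons_red d (P : porderType d) (g : P * P) (w : seq (P * P)) :=
  if g.1 == g.2 then w else
  match w with
  | h :: w' => if g.2 == h.1 then (g.1, h.2) :: w' else g :: w
  | [::] => [:: g] end.

Definition nf d (P : porderType d) (w : seq (P * P)) := foldr (@cons_red d P) [::] w.

Definition adj d (P : porderType d) (g : P * P) (w : seq (P * P)) :=
  if w is h :: _ then g.2 != h.1 else true.

Fixpoint red d (P : porderType d) (w : seq (P * P)) : bool :=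
  match w with
  | [::] => true
  | g :: w' => [&& g.1 <= g.2, g.1 != g.2, adj g w' & red w']
  end.

Lemma cons_red_red d (P : porderType d) (g : P * P) w :
  g.1 <= g.2 -> red w -> red (cons_red g w).
Proof.
move=> vg rw; rewrite /cons_red; case: ifP => [//|/negbT ng].
case: w rw => [|h w'] /=; first by rewrite vg ng.
case/and4P=> vh nh ah rw'.
case: eqP => [e|ne] /=.
  have l1 : g.1 <= h.2 by rewrite (le_trans vg) // e.
  rewrite /= l1 rw' andbT /=; apply/andP; split; last by case: (w') ah.
  apply/eqP=> e2.
  move/negP: nh; apply; apply/eqP/le_anti; rewrite vh /= -e2 -e //.
rewrite vg ng /= vh nh ah rw' !andbT; apply/eqP => //.
Qed.

Lemma nf_red d (P : porderType d) (w : seq (P * P)) :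
  all (fun p => p.1 <= p.2) w -> red (nf w).
Proof.
elim: w => [//|g w IH] /= /andP [vg vw]; exact: cons_red_red vg (IH vw).
Qed.

Lemma red_cons d (P : porderType d) (g : P * P) w : red (g :: w) -> red w.
Proof. by case/and4P. Qed.

Lemma cons_red_id d (P : porderType d) (g : P * P) w :
  red (g :: w) -> cons_red g w = g :: w.
Proof.
case/and4P=> _ ng ag _; rewrite /cons_red (negbTE ng).
by case: w ag => [|h w'] //= /negbTE ->.
Qed.

Lemma foldr_red d (P : porderType d) (D C : seq (P * P)) :
  red (D ++ C) -> foldr (@cons_red d P) C D = D ++ C.
Proof.
elim: D => [//|g D IH] /= r; rewrite IH ?(red_cons r) //; exact: cons_red_id.
Qed.

Lemma nf_id d (P : porderType d) (w : seq (P * P)) : red w -> nf w = w.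
Proof. by move=> r; rewrite /nf -{2}(cats0 w) foldr_red // cats0. Qed.

Lemma nf_cat d (P : porderType d) (u v : seq (P * P)) :
  nf (u ++ v) = foldr (@cons_red d P) (nf v) u.
Proof. by rewrite /nf foldr_cat. Qed.

Definition N d (P : porderType d) (u : seq (ivgen P)) : seq (P * P) :=
  nf (map val u).

Lemma cons_split d (P : porderType d) (x y z : P) W :
  x <= y -> y <= z -> cons_red (x, z) W = cons_red (x, y) (cons_red (y, z) W).
Proof.
move=> hxy hyz; rewrite /cons_red /=.
case: (x =P y) => [exy|nxy].
  by subst y.
case: (y =P z) => [eyz|nyz].
  by subst z; case: eqP => // /nxy.
have nxz : (x == z) = false.
  apply/eqP => exz; apply: nxy; apply/le_anti; rewrite hxy /= exz //.
rewrite nxz.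
case: W => [|h W'] /=; first by rewrite eqxx.
by case: (z == h.1) => /=; rewrite ?eqxx.
Qed.

Lemma all_val d (P : porderType d) (u : seq (ivgen P)) :
  all (fun p : P * P => p.1 <= p.2) (map val u).
Proof. rewrite all_map; apply/allP => x _; exact: valP x. Qed.

Lemma N_red d (P : porderType d) (u : seq (ivgen P)) : red (N u).
Proof. exact/nf_red/all_val. Qed.

Lemma cong_sound d (P : porderType d) (u v : seq (ivgen P)) :
  mcong u v -> N u = N v.
Proof.
rewrite /N; elim=> {u v} //.
- by move=> u v w _ -> _ ->.
- move=> u v x; rewrite !map_cat !nf_cat /=.
  by rewrite /cons_red /= eqxx.
- move=> u v x y z hxy hyz; rewrite !map_cat !nf_cat /=.
  by rewrite -cons_split.
Qed.

Lemma mcong_ctx d (P : porderType d) (a b c e : seq (ivgen P)) :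
  mcong a b -> mcong (c ++ a ++ e) (c ++ b ++ e).
Proof.
elim=> {a b}.
- move=> w; exact: mcong_refl.
- move=> u v _ H; exact: mcong_sym.
- move=> u v w _ H1 _ H2; exact: mcong_trans H1 H2.
- move=> u v x; have := mcong_unit (c ++ u) (v ++ e) x.
  by rewrite !catA.
- move=> u v x y z hxy hyz; have := mcong_split (c ++ u) (v ++ e) hxy hyz.
  by rewrite !catA.
Qed.

Lemma lift d (P : porderType d) (W : seq (P * P)) :
  all (fun p : P * P => p.1 <= p.2) W -> exists w : seq (ivgen P), map val w = W.
Proof.
elim: W => [|g W IH] /=; first by exists [::].
case/andP=> vg /IH [w ew]; by exists (exist _ g vg :: w); rewrite /= ew.
Qed.

Lemma red_all d (P : porderType d) (W : seq (P * P)) :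
  red W -> all (fun p : P * P => p.1 <= p.2) W.
Proof. by elim: W => [|g W IH] //= /and4P [-> _ _ /IH]. Qed.

Lemma step d (P : porderType d) (g : ivgen P) (w' : seq (ivgen P)) :
  exists w, mcong (g :: w') w /\ map val w = cons_red (val g) (map val w').
Proof.
case: g => [[x y] hxy]; rewrite /cons_red /=.
case: (x =P y) => [exy|nxy].
  subst y; exists w'; split => //.
  have -> : hxy = lexx x by apply: eq_irrelevance.
  exact: (mcong_unit [::] w' x).
case: w' => [|[[y' z] hyz] w''] /=.
  by exists [:: exist _ (x, y) hxy]; split => //; apply: mcong_refl.
case: (y =P y') => [eyy|nyy].
  subst y'; exists (ivg (le_trans hxy hyz) :: w''); split => //.
  exact/mcong_sym/(mcong_split [::] w'' hxy hyz).
exists (exist _ (x, y) hxy :: exist _ (y', z) hyz :: w''); split => //.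
exact: mcong_refl.
Qed.

Lemma cong_complete d (P : porderType d) (u : seq (ivgen P)) :
  exists w, mcong u w /\ map val w = N u.
Proof.
elim: u => [|g u [w [cw ew]]]; first by exists [::]; split => //; apply: mcong_refl.
have [w2 [c2 e2]] := step g w.
exists w2; split; last by rewrite e2 ew.
apply: mcong_trans c2.
by have := mcong_ctx [:: g] [::] cw; rewrite !cats0.
Qed.

Lemma cong_iff d (P : porderType d) (u v : seq (ivgen P)) :
  mcong u v <-> N u = N v.
Proof.
split; first exact: cong_sound.
have [wu [cu eu]] := cong_complete u; have [wv [cv ev]] := cong_complete v.
move=> e; have ew : wu = wv by apply: (inj_map val_inj); rewrite eu ev.
subst wv; apply: mcong_trans cu _; exact: mcong_sym.
Qed.

Lemma N_cat d (P : porderType d) (u v : seq (ivgen P)) :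
  N (u ++ v) = nf (N u ++ N v).
Proof.
have [wu [cu eu]] := cong_complete u; have [wv [cv ev]] := cong_complete v.
have c : mcong (u ++ v) (wu ++ wv).
  apply: mcong_trans (_ : mcong (wu ++ v) _).
    by have := mcong_ctx [::] v cu.
  by have := mcong_ctx wu [::] cv; rewrite !cats0.
by rewrite (cong_sound c) /N map_cat eu ev.
Qed.

Fixpoint ldiv d (P : porderType d) (H A : seq (P * P)) : Prop :=
  match H, A with
  | [::], _ => True
  | h :: H', a :: A' =>
      h.1 = a.1 /\ (if H' is [::] then h.2 <= a.2 else h.2 = a.2 /\ ldiv H' A')
  | _ :: _, [::] => False
  end.

Lemma ldiv_head d (P : porderType d) (h : P * P) H A :
  ldiv (h :: H) A -> exists a A', A = a :: A' /\ h.1 = a.1.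
Proof. by case: A => [|a A'] //= [e _]; exists a, A'. Qed.

Lemma ldiv_of_nf d (P : porderType d) (D C : seq (P * P)) :
  red D -> red C -> ldiv D (foldr (@cons_red d P) C D).
Proof.
move=> + rC; elim: D => [//|h D IH] /and4P [vh nh ah rD].
case: D ah rD IH => [|d1 D2] ah rD IH.
  clear IH => /=; rewrite /cons_red (negbTE nh).
  case: C rC => [|c C'] /=; first by split.
  case/and4P => vc _ _ _.
  by case: eqP => [e|_] /=; split => //; rewrite e.
have [x [X' [eX ex]]] := ldiv_head (IH rD).
have IH' := IH rD; rewrite eX in IH'.
have -> : foldr (@cons_red d P) C [:: h, d1 & D2] = cons_red h (x :: X').
  by rewrite -eX.
have -> : cons_red h (x :: X') = h :: x :: X'.
  by move: ah; rewrite /cons_red /adj ex (negbTE nh) => /negbTE ->.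
by [].
Qed.

Lemma nf_of_ldiv d (P : porderType d) (D A : seq (P * P)) :
  red D -> red A -> ldiv D A ->
  exists C, red C /\ A = foldr (@cons_red d P) C D.
Proof.
elim: D A => [|h D IH] A; first by move=> _ rA _; exists A.
case/and4P => vh nh ah rD.
case: A => [//|a A'] rA.
have rA' := red_cons rA.
case: D ah rD IH => [|d1 D2] ah rD IH /=.
  case=> e1 e2.
  case: (h.2 =P a.2) => [e3|n3].
    have ha : h = a by case: h a e1 e3 {vh nh ah e2 rA} => [h1 h2] [a1 a2] /= -> ->.
    subst a; exists A'; split => //; by rewrite cons_red_id.
  exists ((h.2, a.2) :: A'); split.
    move: rA => /= /and4P [_ _ aa _]; rewrite e2 rA' andbT /=.
    apply/andP; split; first by apply/eqP.
    by case: (A') aa.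
  rewrite /cons_red (negbTE nh) eqxx /=.
  by rewrite e1; case: (a).
case=> e1 [e2 hD].
have ha : h = a by case: h a e1 e2 {vh nh ah hD rA} => [h1 h2] [a1 a2] /= -> ->.
subst a.
have [C [rC eC]] := IH A' rD rA' hD.
exists C; split => //=.
have -> : cons_red d1 (foldr (@cons_red d P) C D2) = A' by rewrite eC.
by rewrite cons_red_id.
Qed.

Lemma lift_red d (P : porderType d) (W : seq (P * P)) :
  red W -> exists w : seq (ivgen P), N w = W.
Proof.
move=> rW; have [w ew] := lift (red_all rW); exists w; by rewrite /N ew nf_id.
Qed.

Lemma mleft_iff d (P : porderType d) (g a : seq (ivgen P)) :
  mleft g a <-> ldiv (N g) (N a).
Proof.
split.
  case=> c /cong_sound; rewrite N_cat nf_cat (nf_id (N_red c)) => ->.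
  exact: ldiv_of_nf (N_red g) (N_red c).
move=> /(nf_of_ldiv (N_red g) (N_red a)) [C [rC eC]].
have [c ec] := lift_red rC.
exists c; apply/cong_iff; by rewrite N_cat nf_cat ec (nf_id rC).
Qed.

Lemma N_cat' d (P : porderType d) (u v : seq (ivgen P)) :
  N (u ++ v) = foldr (@cons_red d P) (N v) (N u).
Proof. by rewrite N_cat nf_cat nf_id // N_red. Qed.

Lemma N_nil d (P : porderType d) : N ([::] : seq (ivgen P)) = [::].
Proof. by []. Qed.

Lemma cons_red_nil d (P : porderType d) (g : P * P) X :
  g.1 != g.2 -> cons_red g X <> [::].
Proof.
rewrite /cons_red => /negbTE ->; case: X => [|x X'] //.
by case: ifP.
Qed.

Lemma conical_all d (P : porderType d) : conical P.
Proof.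
move=> a b /cong_iff; rewrite N_cat' N_nil => e; apply/cong_iff; rewrite N_nil.
move: e (N_red a); case: (N a) => [//|g A] /= e /and4P [_ ng _ _].
by case: (cons_red_nil ng e).
Qed.

Lemma foldr_red_closed d (P : porderType d) (A X : seq (P * P)) :
  all (fun p : P * P => p.1 <= p.2) A -> red X -> red (foldr (@cons_red d P) X A).
Proof.
elim: A => [//|g A IH] /= /andP [vg vA] rX; exact: cons_red_red vg (IH vA rX).
Qed.

Lemma cons_red_inj d (P : porderType d) (g : P * P) X Y :
  g.1 != g.2 -> red X -> red Y -> cons_red g X = cons_red g Y -> X = Y.
Proof.
case: g => [g1 g2] /= ng; rewrite /cons_red /= (negbTE ng).
case: X => [|[x1 x2] X']; case: Y => [|[y1 y2] Y'] //= rX rY.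
- move: rY => /and4P [_ ny _ _].
  case: ifP => [/eqP e|_] E; last by case: E.
  case: E => e2 e3; move: ny; by rewrite /= -e e2 eqxx.
- move: rX => /and4P [_ nx _ _].
  case: ifP => [/eqP e|_] E; last by case: E.
  case: E => e2 e3; move: nx; by rewrite /= -e -e2 eqxx.
- move: rX rY => /and4P [_ nx _ _] /and4P [_ ny _ _].
  case: ifP => /eqP e1; case: ifP => /eqP e2 /= E.
  + by case: E => -> ->; rewrite /= in e1 e2; rewrite -e1 -e2.
  + case: E => e4 e5; first [move: ny; by rewrite /= -e2 e4 eqxx | move: nx; by rewrite /= -e1 e4 eqxx].
  + case: E => e4 e5; first [move: ny; by rewrite /= -e2 e4 eqxx | move: nx; by rewrite /= -e1 e4 eqxx].
  + by case: E => -> -> ->.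
Qed.

Lemma lcanc_all d (P : porderType d) : left_cancellative P.
Proof.
move=> a b c /cong_iff; rewrite !N_cat' => e; apply/cong_iff.
move: e; have := N_red a; have := N_red b; have := N_red c.
move: (N a) (N b) (N c) => A.
elim: A => [//|g A IH] B C rC rB /= /and4P [vg ng _ rA] e.
apply: IH => //.
apply: cons_red_inj ng _ _ e; apply: foldr_red_closed => //; exact: red_all.
Qed.

Lemma ldiv_nil d (P : porderType d) (H : seq (P * P)) : ldiv H [::] -> H = [::].
Proof. by case: H. Qed.

Lemma gcd_red d (P : porderType d) :
  (forall a : P, upset_meet_semilattice a) ->
  forall A B : seq (P * P), red A -> red B ->
  exists G, [/\ red G, ldiv G A, ldiv G B &
    forall H, red H -> ldiv H A -> ldiv H B -> ldiv H G].
Proof.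
move=> M; elim=> [|a A IH] B rA rB.
  by exists [::]; split => // H _ /ldiv_nil ->.
case: B rB => [|b B] rB.
  by exists [::]; split => // H _ _ /ldiv_nil ->.
move: (rA) (rB) => /and4P [va na aa rA'] /and4P [vb nb ab rB'].
case: (a =P b) => [eab|nab].
  subst b; have [G [rG g1 g2 gu]] := IH B rA' rB'.
  exists (a :: G); split.
  - rewrite /= va na rG andbT /=.
    case: G g1 {g2 gu rG} => [//|g G] /ldiv_head [a' [A'' [eA e]]].
    by move: aa; rewrite eA /= -e.
  - by case: G g1 {g2 gu rG} => [|g G] //= _; split.
  - by case: G g2 {g1 gu rG} => [|g G] //= _; split.
  move=> [//|h H] /and4P [_ _ _ rH].
  case: H rH => [|h1 H] rH //= [e1 [e2 e2']] [e3 [e4 e5]]; split => //.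
  have := gu (h1 :: H) rH e2' e5; case: G {g1 g2 gu rG} => [|g G] //= ->.
case: (a.1 =P b.1) => [e1|n1]; last first.
  exists [::]; split => //.
  by move=> [//|h H] _ /= [-> _] [/n1].
have vb2 : a.1 <= b.2 by rewrite e1.
have [m [hm1 hm2 hm3 hm4]] := M a.1 a.2 b.2 va vb2.
case: (m =P a.1) => [ema|nma].
  exists [::]; split => //.
  move=> [//|h H] /and4P [vh nh _ _].
  case: H => [|h1 H] /=.
    move=> [f1 f2] [f3 f4]; exfalso; move/negP: nh; apply.
    apply/eqP/le_anti; rewrite vh /= f1 -ema hm4 // -f1 //.
  move=> [f1 [f2 _]] [f3 [f4 _]]; exfalso; apply: nab.
  by case: a b f1 f2 f3 f4 {va na aa rA' vb nb ab rB' e1 hm1 hm2 hm3 hm4 ema IH rA rB vb2}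
     => [a1 a2] [b1 b2] /= <- <- <- <-.
exists [:: (a.1, m)]; split => //.
- rewrite /= hm1 /= !andbT; apply/negP => /eqP e; apply: nma; by rewrite e.
move=> [//|h H] /and4P [vh nh _ _].
case: H => [|h1 H] /=.
  move=> [f1 f2] [f3 f4]; split => //; apply: hm4 => //; rewrite -f1 //.
move=> [f1 [f2 _]] [f3 [f4 _]]; exfalso; apply: nab.
by case: a b f1 f2 f3 f4 {va na aa rA' vb nb ab rB' e1 hm1 hm2 hm3 hm4 nma IH rA rB vb2}
   => [a1 a2] [b1 b2] /= <- <- <- <-.
Qed.

Lemma red1 d (P : porderType d) (a x : P) : a <= x -> a != x -> red [:: (a, x)].
Proof. by move=> h1 h2; rewrite /= h1 h2. Qed.

Lemma left_main d (P : porderType d) :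
  left_gcd_monoid P <-> forall a : P, upset_meet_semilattice a.
Proof.
split.
  case=> _ _ G a x y hx hy.
  case: (x =P a) => [exa|nxa].
    by exists a; split => // z _ hz _; rewrite -exa.
  case: (y =P a) => [eya|nya].
    by exists a; split => // z _ _ hz; rewrite -eya.
  have nax : a != x by apply/eqP => e; apply: nxa; rewrite e.
  have nay : a != y by apply/eqP => e; apply: nya; rewrite e.
  have [u eu] := lift_red (red1 hx nax).
  have [v ev] := lift_red (red1 hy nay).
  have [g [/mleft_iff gu /mleft_iff gv gg]] := G u v.
  rewrite eu in gu; rewrite ev in gv.
  have key : forall z, a <= z -> z <= x -> z <= y -> a != z -> ldiv [:: (a, z)] (N g).
    move=> z h1 h2 h3 h4; have [w ew] := lift_red (red1 h1 h4).
    rewrite -ew; apply/mleft_iff; apply: gg.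
      by apply/mleft_iff; rewrite eu ew /=; split.
    by apply/mleft_iff; rewrite ev ew /=; split.
  have rg := N_red g.
  case: (N g) gu gv rg key => [|g1 [|g2 G']] //=.
    move=> _ _ _ key; exists a; split => // z h1 h2 h3.
    case: (z =P a) => [-> //|nza].
    have : a != z by apply/eqP => e; apply: nza; rewrite e.
    by move/(key z h1 h2 h3).
  move=> [e1 f1] [_ f2] /andP [vg _] key.
  exists g1.2; split => //; first by rewrite -e1.
  move=> z h1 h2 h3; case: (z =P a) => [-> |nza]; first by rewrite -e1.
  have : a != z by apply/eqP => e; apply: nza; rewrite e.
  by move/(key z h1 h2 h3) => [].
by move=> [_ [_ []]].
move=> M; split; [exact: conical_all | exact: lcanc_all |].
move=> a b.
have [G [rG g1 g2 gu]] := gcd_red M (N_red a) (N_red b).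
have [g eg] := lift_red rG.
exists g; split; [apply/mleft_iff; by rewrite eg | apply/mleft_iff; by rewrite eg | ].
move=> h /mleft_iff h1 /mleft_iff h2; apply/mleft_iff; rewrite eg.
exact: gu (N_red h) h1 h2.
Qed.

Lemma flip_ok d1 (P : porderType d1) d2 (Q : porderType d2) (t : P -> Q)
  (ht : forall x y, (t x <= t y) = (y <= x)) (g : ivgen P) :
  (t (sval g).2, t (sval g).1).1 <= (t (sval g).2, t (sval g).1).2.
Proof. by rewrite /= ht; exact: (svalP g). Qed.

Definition flipg d1 (P : porderType d1) d2 (Q : porderType d2) (t : P -> Q)
  (ht : forall x y, (t x <= t y) = (y <= x)) (g : ivgen P) : ivgen Q :=
  exist (fun p : Q * Q => p.1 <= p.2) (t (sval g).2, t (sval g).1) (flip_ok ht g).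

Definition FW d1 (P : porderType d1) d2 (Q : porderType d2) (t : P -> Q)
  (ht : forall x y, (t x <= t y) = (y <= x)) (u : seq (ivgen P)) : seq (ivgen Q) :=
  rev (map (flipg ht) u).

Lemma FW_cat d1 (P : porderType d1) d2 (Q : porderType d2) (t : P -> Q)
  (ht : forall x y, (t x <= t y) = (y <= x)) (u v : seq (ivgen P)) :
  FW ht (u ++ v) = FW ht v ++ FW ht u.
Proof. by rewrite /FW map_cat rev_cat. Qed.

Lemma FW_transfer d1 (P : porderType d1) d2 (Q : porderType d2) (t : P -> Q)
  (ht : forall x y, (t x <= t y) = (y <= x)) (u v : seq (ivgen P)) :
  mcong u v -> mcong (FW ht u) (FW ht v).
Proof.
elim=> {u v}.
- move=> w; exact: mcong_refl.
- move=> u v _ H; exact: mcong_sym.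
- move=> u v w _ H1 _ H2; exact: mcong_trans H1 H2.
- move=> u v x; rewrite !FW_cat.
  have -> : FW ht [:: ivg (lexx x)] = [:: ivg (lexx (t x))] by congr (_ :: _); apply: val_inj.
  rewrite -!catA; exact: mcong_unit.
- move=> u v x y z hxy hyz; rewrite !FW_cat.
  have hzy : t z <= t y by rewrite ht.
  have hyx : t y <= t x by rewrite ht.
  have -> : FW ht [:: ivg (le_trans hxy hyz)] = [:: ivg (le_trans hzy hyx)].
    by congr (_ :: _); apply: val_inj.
  have -> : FW ht [:: ivg hxy; ivg hyz] = [:: ivg hzy; ivg hyx].
    by rewrite /FW /= rev_cons /=; congr [:: _; _]; apply: val_inj.
  rewrite -!catA; exact: mcong_split.
Qed.

Lemma conical_suffix d (P : porderType d) (a b : seq (ivgen P)) :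
  mcong (b ++ a) [::] -> mcong b [::] -> mcong a [::].
Proof.
move=> h1 h2; apply: mcong_trans h1; apply: mcong_sym.
by have := mcong_ctx [::] a h2.
Qed.

Lemma rl d1 (P : porderType d1) d2 (Q : porderType d2)
  (F : seq (ivgen P) -> seq (ivgen Q)) (G : seq (ivgen Q) -> seq (ivgen P))
  (hF : forall u v, mcong u v -> mcong (F u) (F v))
  (hG : forall u v, mcong u v -> mcong (G u) (G v))
  (FG : forall u, F (G u) = u)
  (Fcat : forall u v, F (u ++ v) = F v ++ F u)
  (Gcat : forall u v, G (u ++ v) = G v ++ G u)
  (Fnil : F [::] = [::]) (Gnil : G [::] = [::]) :
  right_gcd_monoid P -> left_gcd_monoid Q.
Proof.
case=> cP rcP gP; split.
- move=> a b /hG; rewrite Gcat Gnil => H.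
  have := conical_suffix H (cP _ _ H) => /hF; by rewrite FG Fnil.
- move=> a b c /hG; rewrite !Gcat => /rcP /hF; by rewrite !FG.
- move=> a b; have [g [[c1 H1] [c2 H2] gu]] := gP (G a) (G b).
  exists (F g); split.
  + exists (F c1); have := hF _ _ H1; by rewrite FG Fcat.
  + exists (F c2); have := hF _ _ H2; by rewrite FG Fcat.
  move=> h [c3 H3] [c4 H4].
  have m3 : mright (G h) (G a) by exists (G c3); rewrite -Gcat; exact: hG.
  have m4 : mright (G h) (G b) by exists (G c4); rewrite -Gcat; exact: hG.
  have [c5 H5] := gu _ m3 m4.
  by exists (F c5); have := hF _ _ H5; rewrite Fcat FG.
Qed.

Lemma lr d1 (P : porderType d1) d2 (Q : porderType d2)
  (F : seq (ivgen P) -> seq (ivgen Q)) (G : seq (ivgen Q) -> seq (ivgen P))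
  (hF : forall u v, mcong u v -> mcong (F u) (F v))
  (hG : forall u v, mcong u v -> mcong (G u) (G v))
  (GF : forall u, G (F u) = u)
  (Fcat : forall u v, F (u ++ v) = F v ++ F u)
  (Gcat : forall u v, G (u ++ v) = G v ++ G u)
  (Fnil : F [::] = [::]) (Gnil : G [::] = [::]) :
  left_gcd_monoid Q -> right_gcd_monoid P.
Proof.
case=> cQ lcQ gQ; split.
- move=> a b /hF; rewrite Fcat Fnil => H.
  have := conical_suffix H (cQ _ _ H) => /hG; by rewrite GF Gnil.
- move=> a b c /hF; rewrite !Fcat => /lcQ /hG; by rewrite !GF.
- move=> a b; have [g [[c1 H1] [c2 H2] gu]] := gQ (F a) (F b).
  exists (G g); split.
  + exists (G c1); have := hG _ _ H1; by rewrite GF Gcat.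
  + exists (G c2); have := hG _ _ H2; by rewrite GF Gcat.
  move=> h [c3 H3] [c4 H4].
  have m3 : mleft (F h) (F a) by exists (F c3); rewrite -Fcat; exact: hF.
  have m4 : mleft (F h) (F b) by exists (F c4); rewrite -Fcat; exact: hF.
  have [c5 H5] := gu _ m3 m4.
  by exists (G c5); have := hG _ _ H5; rewrite Gcat GF.
Qed.

Lemma htF d (P : porderType d) :
  forall x y : P, (((id : P -> P^d) x) <= ((id : P -> P^d) y)) = (y <= x).
Proof. by []. Qed.

Lemma htG d (P : porderType d) :
  forall x y : P^d, (((id : P^d -> P) x) <= ((id : P^d -> P) y)) = (y <= x).
Proof. by []. Qed.

Lemma FW_inv1 d (P : porderType d) (u : seq (ivgen P)) :
  FW (@htG d P) (FW (@htF d P) u) = u.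
Proof.
rewrite /FW map_rev revK -map_comp; elim: u => [//|g u IH] /=; rewrite IH.
by congr (_ :: _); apply: val_inj; case: g => [[x y] h].
Qed.

Lemma FW_inv2 d (P : porderType d) (u : seq (ivgen P^d)) :
  FW (@htF d P) (FW (@htG d P) u) = u.
Proof.
rewrite /FW map_rev revK -map_comp; elim: u => [//|g u IH] /=; rewrite IH.
by congr (_ :: _); apply: val_inj; case: g => [[x y] h].
Qed.

Theorem proposition7p8 (d : Order.disp_t) (P : porderType d) :
  (left_gcd_monoid P <-> forall a : P, upset_meet_semilattice a) /\
  (right_gcd_monoid P <-> forall a : P, downset_join_semilattice a).
Proof.
split; first exact: left_main.
have hF := @FW_transfer _ _ _ _ _ (@htF d P).
have hG := @FW_transfer _ _ _ _ _ (@htG d P).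
have Fcat := @FW_cat _ _ _ _ _ (@htF d P).
have Gcat := @FW_cat _ _ _ _ _ (@htG d P).
split.
  move=> H; have := rl hF hG (@FW_inv2 d P) Fcat Gcat erefl erefl H.
  move/(left_main (P^d)) => M a; exact: M a.
move=> M; apply: (lr hF hG (@FW_inv1 d P) Fcat Gcat erefl erefl).
apply/(left_main (P^d)) => a; exact: M a.
Qed.
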